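(* Let $q=p^{m_0}$ with $p$ prime and let $\rho$ be a permutation of $\{0,1,2,\ldots\}$. Let $n,m$ be nonnegative integers and $y\in\mathbb{Z}_p$. Set $$s_1:=\sum_{k=0}^{m}\binom{m+n-k}{k,\,m-k,\,n-k}\binom{y}{\rho_\ast(m+n-k)},$$ $$s_2:=\sum_{k=0}^{\rho_\ast m}\binom{\rho_\ast m+\rho_\ast n-k}{k,\,\rho_\ast m-k,\,\rho_\ast n-k}\binom{y}{\rho_\ast m+\rho_\ast n-k}.$$ Then $s_1\equiv s_2\pmod{p}$ in $\mathbb{Z}_p$.
   Context: For $y\in\mathbb{Z}_p$ written $q$-adically as $y=\sum_{j\ge0}c_jq^j$ with $0\le c_j<q$, set $\rho_\ast y:=\sum_{j\ge0}c_jq^{\rho(j)}$; it maps nonnegative integers to nonnegative integers. For $y\in\mathbb{Z}_p$ and an integer $j\ge0$, $\binom{y}{j}=y(y-1)\cdots(y-j+1)/j!\in\mathbb{Z}_p$. The multinomial coefficient $\binom{N}{a,b,c}$ with $a+b+c=N$ denotes $N!/(a!\,b!\,c!)$, taken to be $0$ if any of $a,b,c$ is negative. *)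

(* Defs.v *)
From mathcomp Require Import all_boot all_order all_algebra.
Set Implicit Arguments. Unset Strict Implicit. Unset Printing Implicit Defensive.
Import Order.TTheory GRing.Theory Num.Theory.
Local Open Scope ring_scope.

(* p-adic integers Z_p = lim Z/p^k, represented by coherent sequences of
   integer representatives x k of (x mod p^k); two sequences represent the
   same p-adic integer iff they agree mod p^k at every level k. *)
Definition is_zp (p : nat) (x : nat -> int) : Prop :=
  forall k : nat, (x k.+1 = x k %[mod (p ^ k)%N%:Z])%Z.

Definition zp_eqv (p : nat) (x y : nat -> int) : Prop :=
  forall k : nat, (x k = y k %[mod (p ^ k)%N%:Z])%Z.

(* z represents binom(y, j) = y(y-1)...(y-j+1)/j! in Z_p, i.e.
   z is a p-adic integer with j! * z = y(y-1)...(y-j+1) in Z_p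
   (this determines z uniquely since Z_p is torsion-free). *)
Definition is_binom_zp (p : nat) (y : nat -> int) (j : nat) (z : nat -> int) : Prop :=
  is_zp p z /\
  zp_eqv p (fun k => (j`!)%:Z * z k) (fun k => \prod_(i < j) (y k - i%:Z)).

(* rho_* on nonnegative integers: permute the base-q digit positions.
   For q >= 2, the digits of y at positions >= y are zero. *)
Definition rho_star (q : nat) (rho : nat -> nat) (y : nat) : nat :=
  (\sum_(j < y.+1) (y %/ q ^ j %% q) * q ^ (rho j))%N.

Definition multinom (N : nat) (a b c : int) : nat :=
  match a, b, c with
  | Posz a', Posz b', Posz c' =>
      if (a' + b' + c' == N)%N then (N`! %/ (a'`! * b'`! * c'`!))%N else 0%N
  | _, _, _ => 0%N
  end.

(* Main.v *)
Require Import Defs.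
From mathcomp Require Import all_boot all_order all_algebra.
From mathcomp Require Import ring zify.
Import Order.TTheory GRing.Theory Num.Theory.
Local Open Scope ring_scope.

Lemma coef_X1n (R : nzRingType) (n i : nat) :
  ((('X + 1 : {poly R}) ^+ n)`_i = ('C(n, i))%:R).
Proof.
elim: n i => [|n IH] i.
  by rewrite expr0 coefC; case: i.
rewrite exprSr mulrDr mulr1 coefD coefMX !IH.
case: i => [|i] /=; first by rewrite !bin0 add0r.
by rewrite (binS n i) natrD addrC.
Qed.

Lemma frob_q p e : prime p ->
  ('X + 1 : {poly 'F_p}) ^+ (p ^ e) = 'X^(p ^ e) + 1.
Proof.
move=> pp.
have hc : p \in [pchar {poly 'F_p}] by rewrite pchar_poly pchar_Fp.
rewrite exprDn_pchar ?expr1n //.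
rewrite (eq_pnat _ (pcharf_eq hc)) pnatX pnat_id //; by rewrite orbT.
Qed.

Lemma lucas1 p e a b r s : prime p -> (r < p ^ e)%N -> (s < p ^ e)%N ->
  ('C(a * p ^ e + r, b * p ^ e + s)%:R : 'F_p) = ('C(a, b) * 'C(r, s))%:R.
Proof.
move=> pp hr hs; set q := (p ^ e)%N in hr hs *.
rewrite -coef_X1n exprD mulnC exprM frob_q // exprD1n mulr_suml coef_sum.
have key : forall i : nat, i != b ->
   (('X^q ^+ i *+ 'C(a, i) * ('X + 1) ^+ r : {poly 'F_p})`_(b * q + s)) = 0.
  move=> i hib; rewrite mulrnAl -exprM coefMn coefXnM coef_X1n.
  case: ifP => [_|hlt]; first by rewrite mul0rn. rewrite bin_small ?mul0rn //.
  have [hbi|hib2] := ltnP b i.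
    have : ((b.+1) * q <= i * q)%N by rewrite leq_mul2r hbi orbT.
    rewrite mulSn mulnC => h; have h2 := negbT hlt; rewrite -leqNgt in h2.
    have : (b * q + s < q * b + q)%N. rewrite mulnC ltn_add2l //.
    lia.
  have hib3 : (i < b)%N by rewrite ltn_neqAle hib hib2.
  have : (i.+1 * q <= b * q)%N by rewrite leq_mul2r hib3 orbT.
  rewrite mulSn => h. rewrite mulnC. lia.
have [hb|hb] := ltnP b a.+1.
  rewrite (bigD1 (Ordinal hb)) //= big1 ?addr0.
    rewrite mulrnAl -exprM coefMn coefXnM coef_X1n mulnC ltnNge leq_addr /=.
    by rewrite -/q addKn natrM mulr_natl.
  by move=> i hi; apply: key.
rewrite big1 ?(bin_small hb) ?mul0n //.
move=> i _; apply: key; rewrite neq_ltn (leq_trans (ltn_ord i) hb) //.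
Qed.

Lemma lucas_digits p e (I : nat) (x n : nat -> nat) : prime p ->
  (forall i, x i < p ^ e)%N -> (forall i, n i < p ^ e)%N ->
  ('C(\sum_(i < I) x i * (p ^ e) ^ i, \sum_(i < I) n i * (p ^ e) ^ i)%:R : 'F_p)
   = \prod_(i < I) ('C(x i, n i))%:R.
Proof.
move=> pp; elim: I x n => [|I IH] x n hx hn.
  by rewrite !big_ord0 bin0.
rewrite !big_ord_recl /= !expn0 !muln1.
have E : forall f : nat -> nat, (\sum_(i < I) f (bump 0 i) * (p ^ e) ^ bump 0 i
     = (\sum_(i < I) f i.+1 * (p ^ e) ^ i) * p ^ e)%N.
  move=> f; rewrite big_distrl /=; apply: eq_bigr => i _.
  by rewrite /bump /= expnS; ring.
rewrite !E (addnC (x 0%N)) (addnC (n 0%N)) lucas1 // natrM mulrC.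
by rewrite (IH (fun i => x i.+1) (fun i => n i.+1)) //.
Qed.

Definition dig (q X j : nat) : nat := (X %/ q ^ j %% q)%N.

Lemma digits_expand q J X : (0 < q)%N -> (X < q ^ J)%N ->
  X = (\sum_(j < J) dig q X j * q ^ j)%N.
Proof.
move=> hq; elim: J X => [|J IH] X hX.
  by rewrite big_ord0; move: hX; rewrite expn0; case: X.
rewrite big_ord_recl /dig /= expn0 divn1 muln1.
have hX' : (X %/ q < q ^ J)%N by rewrite ltn_divLR // -expnSr.
rewrite {1}(divn_eq X q) addnC; congr (_ + _)%N.
rewrite {1}(IH _ hX') big_distrl /=; apply: eq_bigr => j _.
by rewrite /dig /bump /= -divnMA -expnS expnS; ring.
Qed.

Lemma dig_small q X j : (X < q ^ j)%N -> dig q X j = 0%N.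
Proof. by move=> h; rewrite /dig divn_small // mod0n. Qed.

Lemma dig_lt q X j : (0 < q)%N -> (dig q X j < q)%N.
Proof. by move=> hq; rewrite /dig ltn_pmod. Qed.

Lemma reidx (R : Type) (idx : R) (op : Monoid.com_law idx) (J I : nat)
  (rho : nat -> nat) (F : nat -> nat -> R) :
  (forall j, (j < J)%N -> (rho j < I)%N) ->
  \big[op/idx]_(i < I) \big[op/idx]_(j < J | rho j == i) F i j
   = \big[op/idx]_(j < J) F (rho j) j.
Proof.
move=> hr.
under eq_bigr => i _ do rewrite big_mkcond.
rewrite exchange_big /=; apply: eq_bigr => j _.
rewrite -big_mkcond /=.
have hj := hr j (ltn_ord j).
rewrite (eq_bigl (pred1 (Ordinal hj))); first by rewrite big_pred1_eq.
by move=> i /=; rewrite eq_sym.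
Qed.

Lemma single (J : nat) (rho : nat -> nat) (i : nat) : injective rho ->
  (forall j : 'I_J, rho j != i) \/
  exists j0 : 'I_J, forall j : 'I_J, (rho j == i) = (j == j0).
Proof.
move=> inj; case: (pickP (fun j : 'I_J => rho j == i)) => [j0 hj0|h].
  right; exists j0 => j; apply/idP/idP => [/eqP hj|/eqP ->//].
  apply/eqP/val_inj/inj; move/eqP: hj0 => ->; exact hj.
by left => j; rewrite h.
Qed.

Lemma rs_ext q (rho : nat -> nat) N J : (1 < q)%N -> (N < J)%N ->
  (\sum_(j < N.+1) dig q N j * q ^ rho j = \sum_(j < J) dig q N j * q ^ rho j)%N.
Proof.
move=> hq hJ.
rewrite (big_ord_widen J (fun j => dig q N j * q ^ rho j)%N hJ) big_mkcond /=.
apply: eq_bigr => j _; case: ifP => // hj.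
rewrite dig_small // (leq_trans (ltn_expl N hq)) // leq_pexp2l ?(ltnW hq) //.
lia.
Qed.

Lemma transfer p e (rho : nat -> nat) (Y N J I : nat) : prime p -> (0 < e)%N ->
  injective rho -> (N < J)%N -> (forall j, (j < J)%N -> (rho j < I)%N) ->
  (Y < (p ^ e) ^ I)%N ->
  ('C(Y, \sum_(j < N.+1) dig (p ^ e) N j * (p ^ e) ^ rho j)%:R : 'F_p)
  = ('C(\sum_(j < J) dig (p ^ e) Y (rho j) * (p ^ e) ^ j, N)%:R).
Proof.
move=> pp he inj hNJ hrI hY.
set q := (p ^ e)%N.
have hq : (1 < q)%N by rewrite /q -{1}(expn0 p) ltn_exp2l ?prime_gt1.
have hq0 : (0 < q)%N by rewrite ltnW.
pose ni i := (\sum_(j < J | rho j == i) dig q N j)%N.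
have hni : forall i, (ni i < q)%N.
  move=> i; case: (single J rho i inj) => [h|[j0 h]].
    by rewrite /ni big_pred0 // => j; apply/negbTE/h.
  by rewrite /ni (eq_bigl _ _ h) big_pred1_eq dig_lt.
have hC : forall x i, 'C(x, ni i) = (\prod_(j < J | rho j == i) 'C(x, dig q N j))%N.
  move=> x i; case: (single J rho i inj) => [h|[j0 h]].
    by rewrite /ni !big_pred0 ?bin0 // => j; apply/negbTE/h.
  by rewrite /ni !(eq_bigl _ _ h) !big_pred1_eq.
rewrite (rs_ext _ _ _ _ hq hNJ).
have -> : (\sum_(j < J) dig q N j * q ^ rho j = \sum_(i < I) ni i * q ^ i)%N.
  rewrite -(@reidx nat 0%N addn J I rho (fun i j => dig q N j * q ^ i)%N hrI).
  by apply: eq_bigr => i _; rewrite /ni big_distrl.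
rewrite {1}(digits_expand _ _ _ hq0 hY) lucas_digits //; last by move=> i; apply: dig_lt.
rewrite {1}(digits_expand _ _ _ hq0 (leq_trans (ltn_expl N hq) (leq_pexp2l hq0 (ltnW hNJ)))).
rewrite (lucas_digits _ _ J (fun j => dig q Y (rho j)) (dig q N)) //; first last.
- by move=> i; apply: dig_lt.
- by move=> i; apply: dig_lt.
rewrite -!natr_prod; congr (_%:R).
under eq_bigr => i _ do rewrite hC.
by rewrite (@reidx nat 1%N muln J I rho (fun i j => 'C(dig q Y i, dig q N j)) hrI).
Qed.

Lemma key_id x m n k : (k <= m)%N -> (k <= n)%N -> (m <= x)%N ->
  ('C(x, m) * 'C(x - m, n - k) = 'C(x, m + n - k) * 'C(m + n - k, m))%N.
Proof.
move=> hkm hkn hmx.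
set T := (m + n - k)%N.
have [hTx|hxT] := leqP T x; last first.
  rewrite (bin_small hxT) mul0n (@bin_small (x - m) (n - k)) ?muln0 //; rewrite /T in hxT; lia.
have e1 := bin_fact hmx.
have e2 : (n - k <= x - m)%N by rewrite /T in hTx; lia.
have e2' := bin_fact e2.
have e3 := bin_fact hTx.
have hmT : (m <= T)%N by rewrite /T; lia.
have e4 := bin_fact hmT.
have h1 : (x - m - (n - k) = x - T)%N by rewrite /T; lia.
have h2 : (T - m = n - k)%N by rewrite /T; lia.
rewrite h1 in e2'; rewrite h2 in e4.
apply/eqP; rewrite -(eqn_pmul2r (_ : 0 < m`! * (n - k)`! * (x - T)`!)%N); last first.
  by rewrite !muln_gt0 !fact_gt0.
apply/eqP.
have -> : ('C(x, m) * 'C(x - m, n - k) * (m`! * (n - k)`! * (x - T)`!)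
   = 'C(x, m) * (m`! * ('C(x - m, n - k) * ((n - k)`! * (x - T)`!))))%N by ring.
rewrite e2' e1.
have -> : ('C(x, T) * 'C(T, m) * (m`! * (n - k)`! * (x - T)`!)
   = 'C(x, T) * (('C(T, m) * (m`! * (n - k)`!)) * (x - T)`!))%N by ring.
by rewrite e4 e3.
Qed.

Lemma bin_prod x m n :
  ('C(x, m) * 'C(x, n) = \sum_(k < m.+1)
     (if (k <= n)%N then 'C(m + n - k, m) * 'C(m, k) else 0) * 'C(x, m + n - k))%N.
Proof.
have [hxm|hmx] := ltnP x m.
  rewrite bin_small // mul0n big1 // => k _; case: ifP => hk; last by rewrite mul0n.
  rewrite (@bin_small x (m + n - k)) ?muln0 //; lia.
pose F k := (if (k <= n)%N then 'C(x, m) * 'C(m, k) * 'C(x - m, n - k) else 0)%N.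
have hA : ('C(x, m) * 'C(x, n) = \sum_(k < (m + n).+1) F k)%N.
  have hx : x = (m + (x - m))%N by lia.
  rewrite {2}hx -binomial.Vandermonde big_distrr /=.
  rewrite (big_ord_widen (m + n).+1 (fun k => 'C(x,m) * ('C(m, k) * 'C(x - m, n - k)))%N);
    last by lia.
  rewrite big_mkcond /=; apply: eq_bigr => k _; rewrite /F ltnS.
  by case: ifP => _ //; rewrite mulnA.
rewrite hA (big_ord_widen (m + n).+1
   (fun k => (if (k <= n)%N then 'C(m + n - k, m) * 'C(m, k) else 0) * 'C(x, m + n - k))%N);
  last by lia.
rewrite [RHS]big_mkcond /=; apply: eq_bigr => k _; rewrite /F.
case: ifP => hkm; case: ifP => hkn //; rewrite ?mul0n //.
  rewrite -mulnA (mulnC (binomial m k)) mulnA key_id //; last by lia.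
by rewrite (@bin_small m k) ?muln0 ?mul0n //; lia.
Qed.

Lemma multinom_eq m n k : (k <= m)%N ->
  multinom (m + n - k) k (m%:Z - k%:Z) (n%:Z - k%:Z)
  = (if (k <= n)%N then 'C(m + n - k, m) * 'C(m, k) else 0)%N.
Proof.
move=> hkm; rewrite /multinom subzn //.
case: ifP => hkn.
  rewrite subzn // ifT; last by apply/eqP; lia.
  set T := (m + n - k)%N.
  have hmT : (m <= T)%N by rewrite /T; lia.
  have e4 := bin_fact hmT.
  have e5 := bin_fact hkm.
  have h2 : (T - m = n - k)%N by rewrite /T; lia.
  rewrite h2 in e4.
  apply/eqP; rewrite eq_sym -(eqn_pmul2r (_ : 0 < k`! * (m - k)`! * (n - k)`!)%N); last first.
    by rewrite !muln_gt0 !fact_gt0.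
  rewrite divnK; last first.
    apply/dvdnP; exists ('C(T, m) * 'C(m, k))%N.
    rewrite -e4 -e5; ring.
  apply/eqP; rewrite -e4 -e5; ring.
have -> : (n%:Z - k%:Z = Negz (k - n).-1)%R.
  rewrite NegzE; have h : (0 < k - n)%N by lia.
  rewrite prednK //; lia.
by [].
Qed.

Lemma zp_coh (p : nat) (x : nat -> int) k : is_zp p x -> (0 < k)%N ->
  (p%:Z %| x k - x 1%N)%Z.
Proof.
move=> hx; elim: k => [//|k IH] _.
case: k IH => [|k] IH; first by rewrite subrr dvdz0.
have h := hx k.+1; move/eqP: h; rewrite eqz_mod_dvd => h.
have -> : x k.+2 - x 1%N = (x k.+2 - x k.+1) + (x k.+1 - x 1%N) by ring.
rewrite rpredD ?IH //.
apply: dvdz_trans h; rewrite expnS PoszM; exact: dvdz_mulr.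
Qed.

Lemma prod_cong (d a b : int) j : (d %| a - b)%Z ->
  (d %| \prod_(i < j) (a - i%:Z) - \prod_(i < j) (b - i%:Z))%Z.
Proof.
move=> h; elim: j => [|j IH]; first by rewrite !big_ord0 subrr dvdz0.
rewrite !big_ord_recr /=.
set A := \prod_(i < j) _; set B := \prod_(i < j) _.
have -> : A * (a - j%:Z) - B * (b - j%:Z) = (A - B) * (a - j%:Z) + B * (a - b) by ring.
by apply: rpredD; [apply: dvdz_mulr | apply: dvdz_mull].
Qed.

Lemma prod_ffact (Y j : nat) : \prod_(i < j) (Y%:Z - i%:Z) = (Y ^_ j)%N%:Z.
Proof.
elim: j => [|j IH]; first by rewrite big_ord0.
rewrite big_ord_recr /= IH ffactnSr.
have [hj|hj] := leqP j Y; first by rewrite PoszM subzn.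
by rewrite ffact_small // mul0r.
Qed.

Lemma cancel_fact (p : nat) (g K : nat) (D : int) : prime p -> (0 < g)%N ->
  (g.+2 <= K)%N -> ((p ^ K)%N%:Z %| g%:Z * D)%Z -> (p%:Z %| D)%Z.
Proof.
move=> pp hg hK h.
have [->|hD] := eqVneq D 0; first exact: dvdz0.
rewrite dvdzE /=; rewrite dvdzE abszM /= in h.
have hD0 : (0 < `|D|)%N by rewrite absz_gt0.
have hp1 := prime_gt1 pp.
move: h; rewrite pfactor_dvdn ?muln_gt0 ?hg // lognM // => hl.
rewrite -(expn1 p) pfactor_dvdn //.
have h1 : (p ^ logn p g <= g)%N by apply: dvdn_leq => //; apply: pfactor_dvdnn.
have h2 := ltn_expl (logn p g) hp1.
lia.
Qed.

Lemma stepA (p : nat) (y Bj : nat -> int) (j K : nat) : prime p -> is_zp p y ->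
  is_binom_zp p y j Bj -> (j`!.+2 <= K)%N ->
  ((Bj 1%N)%:~R : 'F_p) = ('C(`|(y K %% (p ^ K)%N%:Z)%Z|%N, j))%:R.
Proof.
move=> pp hy [hB hBe] hK.
set Y := `|(y K %% (p ^ K)%N%:Z)%Z|%N.
have hp0 : ((p ^ K)%N%:Z != 0).
  have h : (0 < p ^ K)%N by rewrite expn_gt0 prime_gt0.
  apply/eqP => h0; have h1 : (p ^ K)%N = 0%N by case: h0.
  by rewrite h1 in h.
have hYe : (Y%:Z = (y K %% (p ^ K)%N%:Z)%Z) by rewrite /Y gez0_abs // modz_ge0.
have hyY : ((p ^ K)%N%:Z %| y K - Y%:Z)%Z.
  rewrite hYe {1}(divz_eq (y K) (p ^ K)%N%:Z) addrK; exact: dvdz_mull.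
have h1 := hBe K; move/eqP: h1; rewrite eqz_mod_dvd => h1.
have h2 := prod_cong _ _ _ j hyY.
have h3 : ((p ^ K)%N%:Z %| (j`!)%:Z * (Bj K - ('C(Y, j))%:Z))%Z.
  have -> : (j`!)%:Z * (Bj K - ('C(Y, j))%:Z)
     = ((j`!)%:Z * Bj K - \prod_(i < j) (y K - i%:Z))
       + (\prod_(i < j) (y K - i%:Z) - \prod_(i < j) (Y%:Z - i%:Z)).
    rewrite prod_ffact -bin_ffact PoszM; ring.
  by apply: rpredD.
have h4 := cancel_fact _ _ _ _ pp (fact_gt0 j) hK h3.
have hK0 : (0 < K)%N by apply: (leq_trans _ hK).
have h5 := zp_coh _ _ K hB hK0.
have h6 : (p%:Z %| Bj 1%N - ('C(Y, j))%:Z)%Z.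
  have -> : Bj 1%N - ('C(Y, j))%:Z = (Bj K - ('C(Y, j))%:Z) - (Bj K - Bj 1%N) by ring.
  by apply: rpredB.
move: h6; rewrite (dvdz_pcharf (pchar_Fp pp)) mulrzBr subr_eq0 => /eqP ->.
by [].
Qed.

Lemma leq_sum_term (F : nat -> nat) (W j : nat) : (j < W)%N ->
  (F j <= \sum_(i < W) F i)%N.
Proof.
move=> hj; rewrite (bigD1 (Ordinal hj)) //=; exact: leq_addr.
Qed.

Lemma intr_sum (R : pzRingType) (N : nat) (F : 'I_N -> int) :
  ((\sum_(i < N) F i)%:~R : R) = \sum_(i < N) (F i)%:~R.
Proof. by rewrite rmorph_sum. Qed.

Theorem proposition7p5 (p m0 : nat) (rho : nat -> nat) (n m : nat)
    (y : nat -> int) (B : nat -> nat -> int) :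
  prime p -> (0 < m0)%N -> bijective rho ->
  is_zp p y ->
  (forall j : nat, is_binom_zp p y j (B j)) ->
  let q := (p ^ m0)%N in
  let s1 := fun i : nat =>
    \sum_(k < m.+1)
      (multinom (m + n - k) k (m%:Z - k%:Z) (n%:Z - k%:Z))%:Z
        * B (rho_star q rho (m + n - k)%N) i in
  let s2 := fun i : nat =>
    \sum_(k < (rho_star q rho m).+1)
      (multinom (rho_star q rho m + rho_star q rho n - k) k
         ((rho_star q rho m)%:Z - k%:Z) ((rho_star q rho n)%:Z - k%:Z))%:Z
        * B (rho_star q rho m + rho_star q rho n - k)%N i in
  (s1 1%N = s2 1%N %[mod p%:Z])%Z.
Proof.
move=> pp hm0 hbij hy hB q s1 s2.
have inj := bij_inj hbij.
apply/eqP; rewrite eqz_mod_dvd (dvdz_pcharf (pchar_Fp pp)) mulrzBr subr_eq0; apply/eqP.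
set rs := rho_star q rho.
set a := rs m; set b := rs n.
set W := (\sum_(k < m.+1) rs (m + n - k)%N + a + b + 1)%N.
set K := (\sum_(j < W) j`! + 2)%N.
set Y := `|(y K %% (p ^ K)%N%:Z)%Z|%N.
have hA : forall j, (j < W)%N -> ((B j 1%N)%:~R : 'F_p) = ('C(Y, j))%:R.
  move=> j hj; apply: stepA => //.
  have := leq_sum_term (fun j => j`!) _ _ hj; rewrite /K; lia.
set J := (m + n).+1.
set I := (K + \sum_(j < J) rho j + 1)%N.
have hrI : forall j, (j < J)%N -> (rho j < I)%N.
  move=> j hj; have := leq_sum_term rho _ _ hj; rewrite /I; lia.
have hY : (Y < q ^ I)%N.
  have h1 : (Y < p ^ K)%N.
    have hp0 : (0 < p ^ K)%N by rewrite expn_gt0 prime_gt0.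
    have : (Y%:Z < (p ^ K)%N%:Z)%R.
      rewrite /Y gez0_abs ?modz_ge0 ?ltz_pmod //; apply/eqP => h0; have h2 : (p ^ K)%N = 0%N by case: h0.
      by rewrite h2 in hp0.
    by rewrite ltz_nat.
  apply: (leq_trans h1); rewrite /q -expnM leq_pexp2l ?prime_gt0 //.
  have : (K <= I)%N by rewrite /I; lia.
  move=> hKI; apply: (leq_trans hKI); rewrite leq_pmull //.
set Z := (\sum_(j < J) dig q Y (rho j) * q ^ j)%N.
have hT : forall N, (N < J)%N -> (('C(Y, rs N))%:R : 'F_p) = ('C(Z, N))%:R.
  move=> N hN; exact: (transfer _ _ _ _ _ _ _ pp hm0 inj hN hrI hY).
rewrite /s1 /s2 !intr_sum.
transitivity ((('C(Z, m) * 'C(Z, n))%N)%:R : 'F_p).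
  rewrite bin_prod natr_sum; apply: eq_bigr => k _.
  rewrite intrM hA; last first.
    have := leq_sum_term (fun k => rs (m + n - k)%N) _ _ (ltn_ord k); rewrite /W /rs; lia.
  rewrite multinom_eq; last by rewrite -ltnS.
  rewrite natrM -hT //; rewrite /J; lia.
rewrite natrM -!hT; try (rewrite /J; lia).
rewrite -natrM bin_prod natr_sum; apply: eq_bigr => k _.
rewrite intrM hA; last by rewrite /W /a /b /rs; lia.
rewrite multinom_eq; last by rewrite -ltnS.
by rewrite natrM.
Qed.
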